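(* Let $n,p,\ell$ be positive integers, $A\in\mathbb{R}^{n\times n}$, $C\in\mathbb{R}^{p\times n}$, $X_0,W\in\mathbb{R}^{n\times n}$ symmetric positive definite, and $V=\operatorname{diag}(\sigma_{v,1}^2,\dots,\sigma_{v,p}^2)$ with all $\sigma_{v,i}>0$. Let $\mathcal{I}=\{1,\dots,p\}$ and, for $\mathcal{S}\subseteq\mathcal{I}$, let $L$, $U_{\mathcal{S}}$, $J(\mathcal{S})$ and $f(\mathcal{S})=J(\emptyset)-J(\mathcal{S})$ be as defined in the context. Define $$\underline{\gamma}:=\frac{\lambda_{\min}(L)}{\lambda_{\max}(L+U_{\mathcal{I}})},\qquad \overline{\alpha}:=1-\frac{\{\lambda_{\min}(L)\}^2}{\{\lambda_{\max}(L+U_{\mathcal{I}})\}^2}.$$ Then $f:2^{\mathcal{I}}\to\mathbb{R}$ is nondecreasing (i.e. $f(\mathcal{S}_1)\le f(\mathcal{S}_2)$ whenever $\mathcal{S}_1\subseteq\mathcal{S}_2\subseteq\mathcal{I}$), and its submodularity ratio $\gamma$ and curvature $\alpha$ satisfy $$\gamma\ge\underline{\gamma}>0,\qquad \alpha\le\overline{\alpha}<1.$$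
   Context: Let $\Phi\in\mathbb{R}^{n\ell\times n\ell}$ be the block lower-triangular matrix whose $(i,j)$ block ($i,j=1,\dots,\ell$) is $A^{i-j}$ for $i\ge j$ (with $A^0=I_n$) and $0$ for $i<j$. Let $Z=\operatorname{diag}(X_0,W,\dots,W)$ (block diagonal with $\ell$ blocks) and $L:=Z^{-1}$. For $\mathcal{S}=\{\theta_1<\theta_2<\dots<\theta_s\}\subseteq\mathcal{I}$, the selection matrix $S_{\mathcal{S}}\in\mathbb{R}^{s\times p}$ has $[S_{\mathcal{S}}]_{i,j}=1$ if $j=\theta_i$ and $0$ otherwise; set $G=\{I_\ell\otimes(S_{\mathcal{S}}C)\}\Phi$, $V_{\mathcal{S}}=I_\ell\otimes(S_{\mathcal{S}}VS_{\mathcal{S}}^\top)$ and $U_{\mathcal{S}}:=G^\top V_{\mathcal{S}}^{-1}G$, with the convention $U_\emptyset=0$. (Equivalently $U_{\mathcal{S}}=\sum_{i\in\mathcal{S}}\sigma_{v,i}^{-2}\Phi^\top(I_\ell\otimes C)^\top(I_\ell\otimes I^{(i)})(I_\ell\otimes C)\Phi$, where $I^{(i)}$ is the $p\times p$ matrix with a single $1$ in position $(i,i)$.) Define $J(\mathcal{S}):=\operatorname{tr}[(L+U_{\mathcal{S}})^{-1}]$ (this is the smoothing mean square error over times $0,\dots,\ell-1$ for the system $x_{k+1}=Ax_k+w_k$, $y_k=Cx_k+v_k$ using only outputs indexed by $\mathcal{S}$, with $\mathrm{Cov}[x_0]=X_0$, $\mathrm{Cov}[w_k]=W$, $\mathrm{Cov}[v_k]=V$),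 and $f(\mathcal{S}):=-J(\mathcal{S})+J(\emptyset)$. $\lambda_{\min},\lambda_{\max}$ denote minimum and maximum eigenvalues. For $\Omega,\mathcal{S}\subseteq\mathcal{I}$ let $\rho_\Omega(\mathcal{S}):=f(\mathcal{S}\cup\Omega)-f(\mathcal{S})$. The submodularity ratio of $f$ is the largest scalar $\gamma$ such that $\sum_{\omega\in\Omega\setminus\mathcal{S}}\rho_{\{\omega\}}(\mathcal{S})\ge\gamma\,\rho_\Omega(\mathcal{S})$ for all $\Omega,\mathcal{S}\subseteq\mathcal{I}$. The curvature of $f$ is the smallest scalar $\alpha$ such that $\rho_{\{j\}}(\mathcal{S}\setminus\{j\}\cup\Omega)\ge(1-\alpha)\rho_{\{j\}}(\mathcal{S}\setminus\{j\})$ for all $\Omega,\mathcal{S}\subseteq\mathcal{I}$ and all $j\in\mathcal{S}\setminus\Omega$. *)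

(* Defs.v *)
From mathcomp Require Import all_boot all_order all_algebra.
From mathcomp Require Import mxtens.
From mathcomp Require Import reals.
Set Implicit Arguments. Unset Strict Implicit. Unset Printing Implicit Defensive.
Import Order.TTheory GRing.Theory Num.Theory.
Local Open Scope ring_scope.

Section Defs.
Variable R : realType.

Definition spd (k : nat) (M : 'M[R]_k) : Prop :=
  M^T = M /\ forall v : 'rV[R]_k, v != 0 -> 0 < (v *m M *m v^T) 0 0.

Definition shiftmx (l d : nat) : 'M[R]_l :=
  \matrix_(i, j) ((i : nat) == (j : nat) + d)%:R.

(* Phi : block (i,j) = A^(i-j) for i >= j, 0 otherwise.  Kronecker product
   [*t] (mxtens) indexes k : 'I_(l*n) as block k %/ n, inner index k %% n. *)
Definition Phi (n l : nat) (A : 'M[R]_n) : 'M[R]_(l * n) :=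
  \sum_(d < l) (shiftmx l d *t (A ^+ d)).

(* Z = diag(X0, W, ..., W) with l blocks; L = Z^{-1} *)
Definition Zmx (n l : nat) (X0 W : 'M[R]_n) : 'M[R]_(l * n) :=
  (\matrix_(i, j) ((i == j) && ((i : nat) == 0%N))%:R) *t X0
  + (\matrix_(i, j) ((i == j) && ((i : nat) != 0%N))%:R) *t W.

Definition Lmx (n l : nat) (X0 W : 'M[R]_n) : 'M[R]_(l * n) := invmx (Zmx l X0 W).

Definition Umx (n p l : nat) (A : 'M[R]_n) (C : 'M[R]_(p, n))
  (sig : 'I_p -> R) (S : {set 'I_p}) : 'M[R]_(l * n) :=
  \sum_(i in S) ((sig i) ^- 2 *:
     ((Phi l A)^T *m ((1%:M : 'M[R]_l) *t C)^T
        *m ((1%:M : 'M[R]_l) *t delta_mx i i) *m ((1%:M : 'M[R]_l) *t C) *m Phi l A)).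

Definition Jcost (n p l : nat) (A : 'M[R]_n) (C : 'M[R]_(p, n)) (X0 W : 'M[R]_n)
  (sig : 'I_p -> R) (S : {set 'I_p}) : R :=
  \tr (invmx (Lmx l X0 W + Umx l A C sig S)).

Definition fobj (n p l : nat) (A : 'M[R]_n) (C : 'M[R]_(p, n)) (X0 W : 'M[R]_n)
  (sig : 'I_p -> R) (S : {set 'I_p}) : R :=
  - Jcost l A C X0 W sig S + Jcost l A C X0 W sig set0.

Definition is_lambda_min (k : nat) (M : 'M[R]_k) (x : R) : Prop :=
  eigenvalue M x /\ forall y, eigenvalue M y -> x <= y.
Definition is_lambda_max (k : nat) (M : 'M[R]_k) (x : R) : Prop :=
  eigenvalue M x /\ forall y, eigenvalue M y -> y <= x.

Definition rho (p : nat) (f : {set 'I_p} -> R) (Om S : {set 'I_p}) : R :=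
  f (S :|: Om) - f S.

Definition submod_ratio_ineq (p : nat) (f : {set 'I_p} -> R) (g : R) : Prop :=
  forall Om S : {set 'I_p},
    \sum_(w in Om :\: S) rho f [set w] S >= g * rho f Om S.
Definition is_submod_ratio (p : nat) (f : {set 'I_p} -> R) (g : R) : Prop :=
  submod_ratio_ineq f g /\ forall g', submod_ratio_ineq f g' -> g' <= g.

Definition curvature_ineq (p : nat) (f : {set 'I_p} -> R) (a : R) : Prop :=
  forall (Om S : {set 'I_p}) (j : 'I_p), j \in S :\: Om ->
    rho f [set j] ((S :\ j) :|: Om) >= (1 - a) * rho f [set j] (S :\ j).
Definition is_curvature (p : nat) (f : {set 'I_p} -> R) (a : R) : Prop :=
  curvature_ineq f a /\ forall a', curvature_ineq f a' -> a <= a'.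

End Defs.

(* Main.v *)
Require Import Defs.
From mathcomp Require Import all_boot all_order all_algebra.
From mathcomp Require Import mxtens reals.
From mathcomp Require classical_sets.
From mathcomp Require Import ring lra.
Set Implicit Arguments. Unset Strict Implicit. Unset Printing Implicit Defensive.
Import Order.TTheory GRing.Theory Num.Theory.
Local Open Scope ring_scope.


Section QF.
Variable R : realType.
Variable k : nat.
Implicit Types (M N K D : 'M[R]_k) (u v w z : 'rV[R]_k).

Definition bf M u w : R := (u *m M *m w^T) 0 0.
Definition qf M v := bf M v v.
Definition nrm2 v : R := (v *m v^T) 0 0.
Definition psd M := forall v, 0 <= qf M v.

Lemma bf_sym M u w : M^T = M -> bf M u w = bf M w u.
Proof.
move=> sM; rewrite /bf -[in LHS](trmxK (u *m M *m w^T)) mxE.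
by rewrite !trmx_mul trmxK sM mulmxA.
Qed.

Lemma bfDm M N u w : bf (M + N) u w = bf M u w + bf N u w.
Proof. by rewrite /bf mulmxDr mulmxDl mxE. Qed.
Lemma bfNm M u w : bf (- M) u w = - bf M u w.
Proof. by rewrite /bf mulmxN mulNmx mxE. Qed.
Lemma bfBm M N u w : bf (M - N) u w = bf M u w - bf N u w.
Proof. by rewrite bfDm bfNm. Qed.
Lemma bfZm c M u w : bf (c *: M) u w = c * bf M u w.
Proof. by rewrite /bf -scalemxAr -scalemxAl mxE. Qed.
Lemma bfDl M u v w : bf M (u + v) w = bf M u w + bf M v w.
Proof. by rewrite /bf !mulmxDl mxE. Qed.
Lemma bfZl M c u w : bf M (c *: u) w = c * bf M u w.
Proof. by rewrite /bf -!scalemxAl mxE. Qed.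
Lemma bfDr M u v w : bf M u (v + w) = bf M u v + bf M u w.
Proof. by rewrite /bf linearD /= mulmxDr mxE. Qed.
Lemma bfZr M c u w : bf M u (c *: w) = c * bf M u w.
Proof. by rewrite /bf linearZ /= -scalemxAr mxE. Qed.
Lemma bf_mul M K u w : bf M (u *m K) (w *m K) = bf (K *m M *m K^T) u w.
Proof. by rewrite /bf trmx_mul !mulmxA. Qed.
Lemma bf1 u : bf 1%:M u u = nrm2 u.
Proof. by rewrite /bf mulmx1. Qed.
Lemma bf0m u w : bf 0 u w = 0.
Proof. by rewrite /bf mulmx0 mul0mx mxE. Qed.

Lemma nrm2E v : nrm2 v = \sum_i v 0 i ^+ 2.
Proof. by rewrite /nrm2 mxE; apply: eq_bigr => i _; rewrite mxE expr2. Qed.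
Lemma nrm2_ge0 v : 0 <= nrm2 v.
Proof. by rewrite nrm2E sumr_ge0 // => i _; rewrite sqr_ge0. Qed.
Lemma nrm2_eq0 v : (nrm2 v == 0) = (v == 0).
Proof.
apply/idP/idP; last by move/eqP->; rewrite /nrm2 mul0mx mxE.
rewrite nrm2E psumr_eq0 => [/allP H|i _]; last by rewrite sqr_ge0.
apply/eqP/rowP => i; rewrite mxE; apply/eqP; rewrite -sqrf_eq0.
by apply: (implyP (H i (mem_index_enum i))).
Qed.
Lemma nrm2_gt0 v : v != 0 -> 0 < nrm2 v.
Proof. by rewrite -nrm2_eq0 lt0r nrm2_ge0 andbT. Qed.

Lemma CS N u w : N^T = N -> psd N -> bf N u w ^+ 2 <= qf N u * qf N w.
Proof.
move=> sN pN; set b := bf N u w; set a := qf N u; set c := qf N w.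
have E t : qf N (u + t *: w) = a + 2 * t * b + t ^+ 2 * c.
  rewrite /a /c /qf bfDl !bfDr !bfZl !bfZr (bf_sym w u sN) -/b; ring.
have a0 : 0 <= a := pN u.
have c0 : 0 <= c := pN w.
have [c_eq0|c_gt0] := eqVneq c 0.
  have [b_eq0|b_neq0] := eqVneq b 0.
    by rewrite b_eq0 expr0n /= mulr_ge0.
  have := pN (u + (- (a + 1) / (2 * b)) *: w); rewrite E c_eq0.
  have -> : 2 * (- (a + 1) / (2 * b)) * b = - (a + 1) by field; rewrite b_neq0.
  lra.
have cp : 0 < c by rewrite lt0r c_gt0.
have := pN (u + (- b / c) *: w); rewrite E => H.
have : 0 <= (a + 2 * (- b / c) * b + (- b / c) ^+ 2 * c) * c by rewrite mulr_ge0 // ltW.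
have -> : (a + 2 * (- b / c) * b + (- b / c) ^+ 2 * c) * c = a * c - b ^+ 2.
  by field; rewrite c_gt0.
lra.
Qed.

End QF.


Section QF2.
Variable R : realType.
Variable k : nat.
Implicit Types (M N K D X Y : 'M[R]_k) (u v w z : 'rV[R]_k).

Lemma tr_qf m (P : 'M[R]_(k, m)) X : \tr (P^T *m X *m P) = \sum_i qf X (row i P^T).
Proof.
rewrite /mxtrace; apply: eq_bigr => i _.
rewrite /qf /bf !mxE; apply: eq_bigr => j _; rewrite !mxE; congr (_ * _).
by apply: eq_bigr => l _; rewrite !mxE.
Qed.

Lemma tr_GG m (G : 'M[R]_(m, k)) : \tr (G^T *m G) = \sum_i nrm2 (row i G).
Proof.
rewrite mxtrace_mulC /mxtrace; apply: eq_bigr => i _.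
rewrite /nrm2 !mxE; apply: eq_bigr => j _; rewrite !mxE //.
Qed.

Lemma psd_tr m (P : 'M[R]_(k, m)) X : psd X -> 0 <= \tr (P^T *m X *m P).
Proof. by move=> pX; rewrite tr_qf sumr_ge0. Qed.

Lemma psd_tr_le m (P : 'M[R]_(k, m)) X Y : psd (Y - X) ->
  \tr (P^T *m X *m P) <= \tr (P^T *m Y *m P).
Proof.
move=> pYX; rewrite -subr_ge0.
have := psd_tr P pYX; rewrite mulmxDr mulmxDl mxtraceD mulmxN mulNmx.
rewrite ?(linearN (@mxtrace _ _)) /=; apply.
Qed.

Lemma psdD X Y : psd X -> psd Y -> psd (X + Y).
Proof. by move=> pX pY v; rewrite /qf bfDm; exact: addr_ge0 (pX v) (pY v). Qed.
Lemma psd0 : psd (0 : 'M[R]_k).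
Proof. by move=> v; rewrite /qf bf0m. Qed.
Lemma psd_sum (I : finType) (P : pred I) (F : I -> 'M[R]_k) :
  (forall i, P i -> psd (F i)) -> psd (\sum_(i | P i) F i).
Proof.
move=> H; elim/big_rec: _ => [|i x Pi px]; first exact: psd0.
by apply: psdD => //; apply: H.
Qed.
Lemma sym_sum (I : finType) (P : pred I) (F : I -> 'M[R]_k) :
  (forall i, P i -> (F i)^T = F i) -> (\sum_(i | P i) F i)^T = \sum_(i | P i) F i.
Proof.
move=> H; rewrite linear_sum /=.
by apply: eq_bigr => i Pi; apply: H.
Qed.
Lemma psd_GG m (G : 'M[R]_(m, k)) : psd (G^T *m G).
Proof.
move=> v; have -> : qf (G^T *m G) v = nrm2 (v *m G^T).
  by rewrite /qf /bf /nrm2 trmx_mul trmxK !mulmxA.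
exact: nrm2_ge0.
Qed.

End QF2.


Section Inv.
Variable R : realType.
Variable k : nat.
Implicit Types (M N K D X Y : 'M[R]_k) (u v w z : 'rV[R]_k).

Lemma pd_unit M a : 0 < a -> (forall v, a * nrm2 v <= qf M v) -> M \in unitmx.
Proof.
move=> a0 H; rewrite unitmxE unitfE; apply/negP => /det0P [v vn0 vM].
have := H v; rewrite /qf /bf vM mul0mx mxE.
have := nrm2_gt0 vn0 => h1 h2.
have : 0 < a * nrm2 v by rewrite mulr_gt0.
lra.
Qed.

Lemma inv_sym M : M^T = M -> (invmx M)^T = invmx M.
Proof. by move=> sM; rewrite trmx_inv sM. Qed.

Lemma qf_inv M v : M \in unitmx -> M^T = M -> qf (invmx M) v = qf M (v *m invmx M).
Proof.
by move=> uM sM; rewrite /qf bf_mul inv_sym // mulVmx // mul1mx.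
Qed.

Lemma psd1 : psd (1%:M : 'M[R]_k).
Proof. by move=> v; rewrite /qf bf1 nrm2_ge0. Qed.

Lemma psd_inv M a : 0 < a -> (forall v, a * nrm2 v <= qf M v) -> M^T = M -> psd (invmx M).
Proof.
move=> a0 H sM v; have uM := pd_unit a0 H; rewrite qf_inv //.
apply: le_trans (H _); exact: mulr_ge0 (ltW a0) (nrm2_ge0 _).
Qed.

Lemma psd_cong M K : psd M -> psd (K *m M *m K^T).
Proof. by move=> pM v; rewrite /qf -bf_mul; apply: pM. Qed.

Lemma nrm_up N b : N^T = N -> psd N -> (forall v, qf N v <= b * nrm2 v) -> 0 <= b ->
  forall w, nrm2 (w *m N) <= b ^+ 2 * nrm2 w.
Proof.
move=> sN pN H b0 w.
have E : bf N w (w *m N) = nrm2 (w *m N).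
  by rewrite /bf /nrm2 trmx_mul sN !mulmxA.
have := CS w (w *m N) sN pN; rewrite E => h.
have h1 := H w; have h2 := H (w *m N).
have p1 := pN w; have p2 := pN (w *m N).
have n1 := nrm2_ge0 w; have n2 := nrm2_ge0 (w *m N).
have h3 : qf N w * qf N (w *m N) <= (b * nrm2 w) * (b * nrm2 (w *m N)).
  by apply: ler_pM.
have [z|nz] := eqVneq (nrm2 (w *m N)) 0.
  by rewrite z; apply: mulr_ge0 => //; apply: exprn_ge0.
have pz : 0 < nrm2 (w *m N) by rewrite lt0r nz.
have : nrm2 (w *m N) * nrm2 (w *m N) <= (b ^+ 2 * nrm2 w) * nrm2 (w *m N).
  rewrite -expr2; apply: le_trans h (le_trans h3 _); rewrite le_eqVlt; apply/orP; left; apply/eqP; ring.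
by rewrite ler_pM2r.
Qed.

Lemma nrm_low M a : M^T = M -> 0 < a -> (forall v, a * nrm2 v <= qf M v) ->
  forall w, a ^+ 2 * nrm2 w <= nrm2 (w *m M).
Proof.
move=> sM a0 H w.
have E : bf 1%:M w (w *m M) = qf M w.
  by rewrite /bf /qf mulmx1 trmx_mul sM mulmxA.
have := CS w (w *m M) (trmx1 _ _) (@psd1); rewrite E /qf !bf1 -/(qf M w) => h.
have h1 := H w; have n1 := nrm2_ge0 w; have n2 := nrm2_ge0 (w *m M).
have q0 : 0 <= a * nrm2 w := mulr_ge0 (ltW a0) n1.
have h2 : (a * nrm2 w) ^+ 2 <= qf M w ^+ 2.
  by rewrite lerXn2r // ?nnegrE // (le_trans q0 h1).
have [z|nz] := eqVneq (nrm2 w) 0.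
  by rewrite z mulr0.
have pz : 0 < nrm2 w by rewrite lt0r nz.
have : (a ^+ 2 * nrm2 w) * nrm2 w <= nrm2 (w *m M) * nrm2 w.
  have -> : (a ^+ 2 * nrm2 w) * nrm2 w = (a * nrm2 w) ^+ 2 by ring.
  rewrite [X in _ <= X]mulrC; apply: le_trans h2 h.
by rewrite ler_pM2r.
Qed.

End Inv.


Section Core.
Variable R : realType.
Variable k : nat.
Variables (M D : 'M[R]_k) (a b : R).
Hypothesis sM : M^T = M.
Hypothesis sD : D^T = D.
Hypothesis pD : psd D.
Hypothesis a0 : 0 < a.
Hypothesis Ha : forall v, a * nrm2 v <= qf M v.

Let M' := M + D.
Let K0 := invmx M.
Let K1 := invmx M'.

Lemma Ha' v : a * nrm2 v <= qf M' v.
Proof. by rewrite /M' /qf bfDm; have := Ha v; have := pD v; rewrite /qf; lra. Qed.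
Let uM : M \in unitmx := pd_unit a0 Ha.
Let uM' : M' \in unitmx := pd_unit a0 Ha'.
Let sM' : M'^T = M'.
Proof. by rewrite /M' linearD /= sM sD. Qed.
Let sK0 : K0^T = K0 := inv_sym sM.
Let sK1 : K1^T = K1 := inv_sym sM'.
Let pK0 : psd K0 := psd_inv a0 Ha sM.
Let pK1 : psd K1 := psd_inv a0 Ha' sM'.
Let pM' : psd M'.
Proof. by move=> v; apply: le_trans (Ha' v); exact: mulr_ge0 (ltW a0) (nrm2_ge0 _). Qed.
Let pM : psd M.
Proof. by move=> v; apply: le_trans (Ha v); exact: mulr_ge0 (ltW a0) (nrm2_ge0 _). Qed.

Lemma K01 : K0 - K1 = K0 *m D *m K1.
Proof.
have -> : D = M' - M by rewrite /M' addrC addKr.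
rewrite mulmxBr mulmxBl -[K0 *m M' *m K1]mulmxA /K1 mulmxV // mulmx1.
by rewrite /K0 mulVmx // mul1mx.
Qed.
Lemma K10 : K0 - K1 = K1 *m D *m K0.
Proof.
have -> : D = M' - M by rewrite /M' addrC addKr.
rewrite mulmxBr mulmxBl -[K1 *m M *m K0]mulmxA /K0 mulmxV // mulmx1.
by rewrite /K1 mulVmx // mul1mx.
Qed.

Lemma I1 : K0 - K1 = K0 *m D *m K0 - K0 *m (D *m K1 *m D) *m K0.
Proof.
have E : K1 = K0 - K1 *m D *m K0 by rewrite -K10 opprB addrC subrK.
by rewrite K01 {1}E mulmxBr !mulmxA.
Qed.

Lemma I2 : K0 - K1 = K1 *m D *m K1 + K1 *m (D *m K0 *m D) *m K1.
Proof.
have E : K0 = K1 + K0 *m D *m K1 by rewrite -K01 addrC subrK.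
by rewrite K10 {1}E mulmxDr !mulmxA.
Qed.

Lemma trK : \tr K0 - \tr K1 = \tr (K0 - K1).
Proof. by rewrite mxtraceD (linearN (@mxtrace _ _)). Qed.

Lemma psd_DKD K : psd K -> psd (D *m K *m D).
Proof. by move=> pK; have := psd_cong D pK; rewrite sD. Qed.

Lemma tr_mono : \tr K1 <= \tr K0.
Proof.
rewrite -subr_ge0 trK I2 mxtraceD addr_ge0 //.
  by have := psd_tr K1 pD; rewrite sK1.
by have := psd_tr K1 (psd_DKD pK0); rewrite sK1.
Qed.

Lemma tr_upper : \tr K0 - \tr K1 <= \tr (K0 *m D *m K0).
Proof.
rewrite trK I1 mxtraceD (linearN (@mxtrace _ _)) /= lerBlDr lerDl.
by have := psd_tr K0 (psd_DKD pK1); rewrite sK0.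
Qed.

Section Lower.
Hypothesis ab : a <= b.
Hypothesis Hb : forall v, qf M' v <= b * nrm2 v.

Lemma loewner : psd ((1 - a / b) *: D - D *m K1 *m D).
Proof.
move=> v.
have b0 : 0 < b by apply: lt_le_trans ab.
pose z := v *m D *m K1.
have EQ : qf (D *m K1 *m D) v = qf M' z.
  rewrite /z -qf_inv // /qf.
  by rewrite bf_mul -{2}sD.
have EB : bf D v z = qf M' z.
  rewrite -EQ /z /qf /bf trmx_mul sK1 trmx_mul sD !mulmxA //.
have hcs := CS v z sD pD; rewrite EB in hcs.
have hQ0 : 0 <= qf M' z by rewrite -EQ; apply: psd_DKD.
have hz : qf D z = qf M' z - qf M z by rewrite /M' /qf bfDm; ring.
have hMz := Ha z.
have hbz := Hb z.
have hDv := pD v.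
have hDz := pD z.
rewrite /qf bfBm bfZm -/(qf D v) -/(qf _ v) EQ.
have r0 : 0 <= a / b by rewrite divr_ge0 // ltW.
have r1 : a / b <= 1 by rewrite ler_pdivrMr // mul1r.
have h1 : a / b * qf M' z <= a * nrm2 z.
  rewrite mulrAC ler_pdivrMr //.
  by rewrite -mulrA [nrm2 z * b]mulrC ler_pM2l.
move: (a / b) r0 r1 h1 => r r0 r1 h1.
have h2 : qf D z <= (1 - r) * qf M' z by lra.
have h3 : qf M' z ^+ 2 <= qf D v * ((1 - r) * qf M' z).
  apply: le_trans hcs _; apply: ler_wpM2l => //.
move: (qf M' z) (qf D v) hQ0 hDv h3 => Q d hQ0 hd h3.
have [->|nQ] := eqVneq Q 0; first by rewrite subr0 mulr_ge0 // subr_ge0.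
have pQ : 0 < Q by rewrite lt0r nQ.
rewrite subr_ge0 -(ler_pM2r pQ) -expr2.
by apply: le_trans h3 _; rewrite mulrA [d * _]mulrC.
Qed.

Lemma tr_lower : a / b * \tr (K0 *m D *m K0) <= \tr K0 - \tr K1.
Proof.
rewrite trK I1 mxtraceD (linearN (@mxtrace _ _)) /=.
have := psd_tr_le K0 loewner; rewrite sK0.
rewrite -scalemxAr -scalemxAl mxtraceZ mulrBl mul1r.
lra.
Qed.

Lemma curv_lower m (G : 'M[R]_(m, k)) : D = G^T *m G ->
  \tr (G^T *m G) / b ^+ 2 <= \tr K0 - \tr K1.
Proof.
move=> DG.
have b0 : 0 < b by apply: lt_le_trans ab.
rewrite trK I2 mxtraceD.
have h2 : 0 <= \tr (K1 *m (D *m K0 *m D) *m K1).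
  by have := psd_tr K1 (psd_DKD pK0); rewrite sK1.
suff : \tr (G^T *m G) / b ^+ 2 <= \tr (K1 *m D *m K1) by lra.
have -> : K1 *m D *m K1 = (G *m K1)^T *m (G *m K1).
  by rewrite trmx_mul sK1 DG !mulmxA.
rewrite !tr_GG mulr_suml; apply: ler_sum => i _.
rewrite row_mul ler_pdivrMr ?exprn_gt0 // mulrC.
have := nrm_up sM' pM' Hb (ltW b0) (row i G *m K1).
by rewrite -mulmxA /K1 mulVmx // mulmx1.
Qed.
End Lower.

Lemma curv_upper m (G : 'M[R]_(m, k)) : D = G^T *m G ->
  \tr (K0 *m D *m K0) <= \tr (G^T *m G) / a ^+ 2.
Proof.
move=> DG.
have -> : K0 *m D *m K0 = (G *m K0)^T *m (G *m K0).
  by rewrite trmx_mul sK0 DG !mulmxA.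
rewrite !tr_GG mulr_suml; apply: ler_sum => i _.
rewrite row_mul ler_pdivlMr ?exprn_gt0 // mulrC.
have := nrm_low sM a0 Ha (row i G *m K0).
by rewrite -mulmxA /K0 mulVmx // mulmx1.
Qed.
End Core.


Section Spec.
Variable R : realType.
Variable k : nat.
Implicit Types (M N K : 'M[R]_k) (v w : 'rV[R]_k).

Lemma qfE M v : qf M v = \sum_i \sum_j v 0 i * M i j * v 0 j.
Proof.
rewrite /qf /bf mxE exchange_big /=; apply: eq_bigr => j _.
rewrite !mxE mulr_suml; apply: eq_bigr => i _. rewrite ?mxE //.
Qed.

Lemma sq_le_nrm2 v i : v 0 i ^+ 2 <= nrm2 v.
Proof.
rewrite nrm2E (bigD1 i) //= lerDl sumr_ge0 // => j _; exact: sqr_ge0.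
Qed.

Definition cabs M : R := \sum_i \sum_j `|M i j|.

Lemma qf_abs M v : `|qf M v| <= cabs M * nrm2 v.
Proof.
rewrite qfE /cabs mulr_suml; apply: le_trans (ler_norm_sum _ _ _) _.
apply: ler_sum => i _; rewrite mulr_suml.
apply: le_trans (ler_norm_sum _ _ _) _; apply: ler_sum => j _.
rewrite mulrAC !normrM mulrC ler_wpM2l //.
have hi := sq_le_nrm2 v i; have hj := sq_le_nrm2 v j.
have : 2 * (`|v 0 i| * `|v 0 j|) <= v 0 i ^+ 2 + v 0 j ^+ 2.
  rewrite -[v 0 i ^+ 2]real_normK ?num_real // -[v 0 j ^+ 2]real_normK ?num_real //.
  have := sqr_ge0 (`|v 0 i| - `|v 0 j|); rewrite sqrrB; lra.
lra.
Qed.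

Lemma qf_ub M v : qf M v <= cabs M * nrm2 v.
Proof. exact: le_trans (ler_norm _) (qf_abs M v). Qed.
Lemma qf_lb M v : - (cabs M * nrm2 v) <= qf M v.
Proof. by rewrite lerNl; apply: le_trans (qf_abs M v); rewrite -normrN ler_norm. Qed.

Lemma qf0v M : qf M 0 = 0.
Proof. by rewrite /qf /bf !mul0mx mxE. Qed.

Lemma rayleigh_min M lmin : (0 < k)%N -> M^T = M ->
  (forall y, eigenvalue M y -> lmin <= y) -> forall v, lmin * nrm2 v <= qf M v.
Proof.
move=> k0 sM Hmin.
pose E : classical_sets.set R := fun t => forall v, t * nrm2 v <= qf M v.
have E0 : E (- cabs M) by move=> v /=; rewrite mulNr; apply: qf_lb.
pose v0 : 'rV[R]_k := \row_j (j == Ordinal k0)%:R.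
have v0n : v0 != 0.
  apply/negP => /eqP/rowP/(_ (Ordinal k0)); rewrite !mxE eqxx /=; apply/eqP; exact: oner_neq0.
have n0 := nrm2_gt0 v0n.
have ubE : classical_sets.ubound E (qf M v0 / nrm2 v0).
  by move=> t Et; rewrite ler_pdivlMr //; apply: Et.
have hsE : classical_sets.has_sup E by split; [exists (- cabs M) | exists (qf M v0 / nrm2 v0)].
set mu := sup E.
have Emu : E mu.
  move=> v; have [->|vn] := eqVneq v 0.
    by rewrite qf0v /nrm2 mul0mx mxE mulr0.
  have nv := nrm2_gt0 vn.
  rewrite -ler_pdivlMr //; apply: ge_sup; first by exists (- cabs M).
  by move=> t Et; rewrite ler_pdivlMr //; apply: Et.
pose N := M - mu *: 1%:M.
have qN v : qf N v = qf M v - mu * nrm2 v.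
  by rewrite /N /qf bfBm bfZm bf1.
have sN : N^T = N by rewrite /N linearB /= sM linearZ /= trmx1.
have pN : psd N by move=> v; rewrite qN subr_ge0; apply: Emu.
have [uN|nuN] := boolP (N \in unitmx).
  exfalso.
  pose K := invmx N.
  have sK : K^T = K := inv_sym sN.
  pose c := cabs K.
  have c0 : 0 <= c by rewrite /c /cabs sumr_ge0 // => i _; rewrite sumr_ge0.
  have key v : nrm2 v <= (c + 1) * qf N v.
    have [->|vn] := eqVneq v 0; first by rewrite qf0v /nrm2 mul0mx mxE mulr0.
    have nv := nrm2_gt0 vn.
    have Eb : bf N v (v *m K) = nrm2 v.
      by rewrite /bf /nrm2 trmx_mul sK !mulmxA -[v *m N *m K]mulmxA mulmxV // mulmx1.
    have := CS v (v *m K) sN pN; rewrite Eb -(qf_inv _ uN sN) -/K => h.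
    have h1 := qf_ub K v; have h2 := pN v.
    have h3 : nrm2 v * nrm2 v <= c * qf N v * nrm2 v.
      rewrite -expr2; apply: le_trans h _.
      by rewrite [c * _]mulrC -mulrA ler_wpM2l.
    rewrite ler_pM2r // in h3.
    have : 0 <= qf N v := h2.
    move: (qf N v) h3 => q h3 hq; nra.
  have Eeps : E (mu + (c + 1)^-1).
    move=> v; have := key v; rewrite qN.
    have cp : 0 < c + 1 by lra.
    rewrite -ler_pdivrMl // => h.
    rewrite mulrDl; lra.
  have := sup_upper_bound hsE Eeps; rewrite -/mu.
  have : 0 < (c + 1)^-1 by rewrite invr_gt0; lra.
  lra.
have : \det N == 0 by rewrite unitmxE unitfE negbK in nuN.
case/det0P => v vn vN.
have : eigenvalue M mu.
  apply/eigenvalueP; exists v => //.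
  by move/eqP: vN; rewrite /N mulmxBr subr_eq0 -scalemxAr mulmx1 => /eqP.
move/Hmin => hle v'.
apply: le_trans (Emu v'); by rewrite ler_wpM2r // nrm2_ge0.
Qed.

Lemma rayleigh_max M lmax : (0 < k)%N -> M^T = M ->
  (forall y, eigenvalue M y -> y <= lmax) -> forall v, qf M v <= lmax * nrm2 v.
Proof.
move=> k0 sM Hmax v.
have sN : (- M)^T = - M by rewrite linearN /= sM.
have := rayleigh_min k0 sN (lmin := - lmax) _ v.
rewrite /qf bfNm mulNr lerN2; apply.
move=> y /eigenvalueP [w wM wn]; rewrite lerNl; apply: Hmax.
by apply/eigenvalueP; exists w => //; rewrite scaleNr -wM mulmxN opprK.
Qed.
End Spec.


Section Tens.
Variable R : realType.
Variables (l n : nat).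

Definition blk (v : 'rV[R]_(l * n)) (i : 'I_l) : 'rV[R]_n :=
  \row_j v 0 (@mxtens_index l n (i, j)).

Lemma sum_tens (F : 'I_(l * n) -> R) :
  \sum_a F a = \sum_i \sum_j F (@mxtens_index l n (i, j)).
Proof.
rewrite (reindex (@mxtens_index l n)) /=; last first.
  by apply: onW_bij; exists (@mxtens_unindex l n); [apply: mxtens_indexK | apply: mxtens_unindexK].
by rewrite pair_big /=; apply: eq_bigr => -[i j].
Qed.

Lemma bfE k (X : 'M[R]_k) u w : bf X u w = \sum_i \sum_j u 0 i * X i j * w 0 j.
Proof.
rewrite /bf mxE exchange_big /=; apply: eq_bigr => j _.
by rewrite !mxE mulr_suml; apply: eq_bigr => i _; rewrite ?mxE.
Qed.

Lemma qf_tens (P : pred 'I_l) (X : 'M[R]_n) v :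
  qf ((\matrix_(i, j) ((i == j) && P i)%:R : 'M[R]_l) *t X) v =
  \sum_i (P i)%:R * qf X (blk v i).
Proof.
rewrite qfE sum_tens; apply: eq_bigr => i _.
rewrite /qf bfE mulr_sumr; apply: eq_bigr => j _.
rewrite sum_tens (bigD1 i) //= [X in _ + X]big1 ?addr0; last first.
  move=> i' ni'; rewrite big1 // => j' _.
  by rewrite tensmxE mxE eq_sym (negbTE ni') /= mul0r mulr0 mul0r.
rewrite mulr_sumr; apply: eq_bigr => j' _.
rewrite tensmxE !mxE eqxx /=; ring.
Qed.

Lemma blk_neq0 v : v != 0 -> exists i, blk v i != 0.
Proof.
move=> vn; have [a va] : exists a, v 0 a != 0.
  apply/existsP; apply: contraR vn => /existsPn H; apply/eqP/rowP => a.
  by rewrite mxE; apply/eqP; rewrite -[_ == _]negbK H.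
move: va; rewrite -[a](@mxtens_unindexK l n) => va.
set p := mxtens_unindex a in va *; exists p.1.
apply: contraNneq va => /rowP/(_ p.2); rewrite !mxE -surjective_pairing => ->.
by rewrite ?mxE.
Qed.

Lemma Z_sym (X0 W : 'M[R]_n) : X0^T = X0 -> W^T = W -> (Zmx l X0 W)^T = Zmx l X0 W.
Proof.
move=> s0 sW; rewrite /Zmx linearD /= !trmx_tens s0 sW; congr (_ *t _ + _ *t _);
  by apply/matrixP => i j; rewrite !mxE eq_sym; case: eqP => // ->.
Qed.

Lemma Z_pd (X0 W : 'M[R]_n) : spd X0 -> spd W ->
  forall v, v != 0 -> 0 < qf (Zmx l X0 W) v.
Proof.
move=> [s0 p0] [sW pW] v vn.
rewrite /Zmx /qf bfDm -!/(qf _ v) !qf_tens -big_split /=.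
have [i bi] := blk_neq0 vn.
rewrite (bigD1 i) //= ltr_pwDl //.
  by case: ((i : nat) == 0%N) => /=; rewrite ?mul1r ?mul0r ?add0r ?addr0; [apply: p0|apply: pW].
rewrite sumr_ge0 // => i' _; rewrite addr_ge0 // mulr_ge0 //.
  have [->|bn] := eqVneq (blk v i') 0; first by rewrite qf0v.
  exact: ltW (p0 _ bn).
have [->|bn] := eqVneq (blk v i') 0; first by rewrite qf0v.
exact: ltW (pW _ bn).
Qed.

End Tens.


Section Main.
Variable R : realType.
Variables (n p l : nat) (A : 'M[R]_n) (C : 'M[R]_(p, n)) (X0 W : 'M[R]_n) (sig : 'I_p -> R).
Hypothesis hsig : forall i, 0 < sig i.

Definition Gm (i : 'I_p) : 'M[R]_(l * p, l * n) :=
  (sig i)^-1 *: (((1%:M : 'M[R]_l) *t delta_mx i i) *m ((1%:M : 'M[R]_l) *t C) *m Phi l A).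

Lemma U_GG S : Umx l A C sig S = \sum_(i in S) (Gm i)^T *m Gm i.
Proof.
apply: eq_bigr => i _; rewrite /Gm linearZ /= linearZ /= -scalemxAl scalerA.
have si : sig i != 0 by rewrite gt_eqF.
congr (_ *: _); first by rewrite expr2 invfM.
rewrite !trmx_mul !trmx_tens !trmx1 trmx_delta !mulmxA.
congr (_ *m _ *m _).
by rewrite -[RHS]mulmxA tensmx_mul mul1mx mul_delta_mx.
Qed.


Notation U := (Umx l A C sig).
Implicit Types S T : {set 'I_p}.

Lemma U_sym S : (U S)^T = U S.
Proof. by rewrite U_GG sym_sum // => i _; rewrite trmx_mul trmxK. Qed.
Lemma U_psd S : psd (U S).
Proof. by rewrite U_GG; apply: psd_sum => i _; apply: psd_GG. Qed.
Lemma U_split S T : S \subset T -> U T = U S + U (T :\: S).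
Proof. by move=> ST; rewrite /Umx (big_setID S) /= (setIidPr ST). Qed.
Lemma U_set1 i : U [set i] = (Gm i)^T *m Gm i.
Proof. by rewrite U_GG big_set1. Qed.
Lemma U_sumD S : U S = \sum_(i in S) U [set i].
Proof. by rewrite U_GG; apply: eq_bigr => i _; rewrite U_set1. Qed.

Section Hyps.
Hypotheses (hX0 : spd X0) (hW : spd W) (n0 : (0 < n)%N) (l0 : (0 < l)%N).
Variables (a b : R).
Hypothesis hmin : is_lambda_min (Lmx l X0 W) a.
Hypothesis hmax : is_lambda_max (Lmx l X0 W + U setT) b.

Notation L := (Lmx l X0 W).
Notation Z := (Zmx l X0 W).

Let k0 : (0 < l * n)%N. Proof. by rewrite muln_gt0 n0 l0. Qed.
Let sZ : Z^T = Z := Z_sym l hX0.1 hW.1.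
Let pdZ : forall v, v != 0 -> 0 < qf Z v := @Z_pd R l n X0 W hX0 hW.
Let uZ : Z \in unitmx.
Proof.
rewrite unitmxE unitfE; apply/negP => /det0P [v vn vZ].
by have := pdZ vn; rewrite /qf /bf vZ mul0mx mxE ltxx.
Qed.
Let sL : L^T = L := inv_sym sZ.
Let pdL v : v != 0 -> 0 < qf L v.
Proof.
move=> vn; rewrite /Lmx qf_inv //; apply: pdZ.
apply: contraNneq vn => h.
have : v *m invmx Z *m Z = 0 by rewrite h mul0mx.
by rewrite -mulmxA mulVmx // mulmx1 => ->.
Qed.

Lemma Ha v : a * nrm2 v <= qf L v.
Proof. exact: rayleigh_min k0 sL hmin.2 v. Qed.

Let sMI : (L + U setT)^T = L + U setT.
Proof. by rewrite linearD /= sL U_sym. Qed.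

Lemma Hb v : qf (L + U setT) v <= b * nrm2 v.
Proof. exact: rayleigh_max k0 sMI hmax.2 v. Qed.

Lemma a_gt0 : 0 < a.
Proof.
have [v vL vn] := eigenvalueP hmin.1.
have := pdL vn; rewrite /qf /bf vL -scalemxAl mxE -/(nrm2 v).
have := nrm2_gt0 vn => h1 h2.
by rewrite pmulr_lgt0 in h2.
Qed.

Lemma HaS S v : a * nrm2 v <= qf (L + U S) v.
Proof. by rewrite /qf bfDm; have := Ha v; have := U_psd S v; rewrite /qf; lra. Qed.

Lemma HbS S v : qf (L + U S) v <= b * nrm2 v.
Proof.
apply: le_trans (Hb v); rewrite (U_split (subsetT S)) addrA /qf bfDm.
by rewrite !bfDm -addrA lerD2l lerDl; apply: U_psd.
Qed.

Lemma a_le_b : a <= b.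
Proof.
have [v vL vn] := eigenvalueP hmin.1.
have h := le_trans (HaS setT v) (HbS setT v).
by rewrite ler_pM2r ?nrm2_gt0 in h.
Qed.

Lemma MS_sym S : (L + U S)^T = L + U S.
Proof. by rewrite linearD /= sL U_sym. Qed.

Lemma MT_split S T : S \subset T -> L + U T = (L + U S) + U (T :\: S).
Proof. by move=> ST; rewrite (U_split ST) addrA. Qed.


Notation J := (Jcost l A C X0 W sig).

Lemma JE S : J S = \tr (invmx (L + U S)).
Proof. by []. Qed.

Lemma Jmono S T : S \subset T -> J T <= J S.
Proof.
move=> ST; rewrite !JE (MT_split ST).
exact: tr_mono (MS_sym S) (U_sym _) (U_psd _) a_gt0 (HaS S).
Qed.

Let hbT S T : S \subset T -> forall v, qf (L + U S + U (T :\: S)) v <= b * nrm2 v.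
Proof. by move=> ST v; rewrite -(MT_split ST); apply: HbS. Qed.

Lemma stepU S T : S \subset T ->
  J S - J T <= \tr (invmx (L + U S) *m U (T :\: S) *m invmx (L + U S)) /\
  a / b * \tr (invmx (L + U S) *m U (T :\: S) *m invmx (L + U S)) <= J S - J T.
Proof.
move=> ST; rewrite !JE (MT_split ST); split.
  exact: tr_upper (MS_sym S) (U_sym _) (U_psd _) a_gt0 (HaS S).
exact: tr_lower (MS_sym S) (U_sym _) (U_psd _) a_gt0 (HaS S) a_le_b (hbT ST).
Qed.

Lemma curvU S j : j \notin S ->
  \tr ((Gm j)^T *m Gm j) / b ^+ 2 <= J S - J (S :|: [set j]) /\
  J S - J (S :|: [set j]) <= \tr ((Gm j)^T *m Gm j) / a ^+ 2.
Proof.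
move=> jS.
have ST : S \subset S :|: [set j] by apply: subsetUl.
have DT : (S :|: [set j]) :\: S = [set j].
  by rewrite setDUl setDv set0U; apply/setDidPl; rewrite disjoints1.
rewrite !JE (MT_split ST) DT; split.
  apply: curv_lower (MS_sym S) (U_sym _) (U_psd _) a_gt0 (HaS S) a_le_b _ _ _ (U_set1 j).
  by move=> v; have := hbT ST v; rewrite DT.
apply: le_trans (tr_upper (MS_sym S) (U_sym _) (U_psd _) a_gt0 (HaS S)) _.
exact: curv_upper (MS_sym S) a_gt0 (HaS S) _ _ (U_set1 j).
Qed.


Lemma final : let f := fobj l A C X0 W sig in
  let gamma_lb := a / b in
  let alpha_ub := 1 - a ^+ 2 / b ^+ 2 in
  (forall S1 S2 : {set 'I_p}, S1 \subset S2 -> f S1 <= f S2) /\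
  (forall g, is_submod_ratio f g -> gamma_lb <= g) /\ 0 < gamma_lb /\
  (forall al, is_curvature f al -> al <= alpha_ub) /\ alpha_ub < 1.
Proof.
move=> f gamma_lb alpha_ub.
have a0 := a_gt0; have b0 : 0 < b := lt_le_trans a0 a_le_b.
have fE S : f S = - J S + J set0 by [].
have rhoE Om S : rho f Om S = J S - J (S :|: Om) by rewrite /rho !fE; ring.
have g0 : 0 <= a / b by rewrite divr_ge0 // ltW.
have Hsub : submod_ratio_ineq f (a / b).
  move=> Om S; rewrite rhoE.
  under eq_bigr => w _ do rewrite rhoE.
  have [up _] := stepU (subsetUl S Om).
  have DO : (S :|: Om) :\: S = Om :\: S by rewrite setDUl setDv set0U.
  rewrite DO in up.
  have E : \tr (invmx (L + U S) *m U (Om :\: S) *m invmx (L + U S)) =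
      \sum_(w in Om :\: S) \tr (invmx (L + U S) *m U [set w] *m invmx (L + U S)).
    by rewrite [U (Om :\: S)]U_sumD mulmx_sumr mulmx_suml raddf_sum.
  rewrite E in up.
  apply: le_trans (ler_wpM2l g0 up) _.
  rewrite mulr_sumr; apply: ler_sum => w; rewrite in_setD => /andP [wS wOm].
  have ST : S \subset S :|: [set w] by apply: subsetUl.
  have [_ lo] := stepU ST.
  have DT : (S :|: [set w]) :\: S = [set w].
    by rewrite setDUl setDv set0U; apply/setDidPl; rewrite disjoints1.
  by rewrite DT in lo.
split.
  by move=> S1 S2 h; rewrite !fE; have := Jmono h; lra.
split; first by move=> g [_ H]; apply: H.
split; first by rewrite /gamma_lb divr_gt0.
have q0 : 0 < a ^+ 2 / b ^+ 2 by rewrite divr_gt0 // exprn_gt0.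
split; last by rewrite /alpha_ub; lra.
move=> al [_ H]; apply: H.
move=> Om S j; rewrite in_setD => /andP [jOm jS]; rewrite !rhoE.
set X := (S :\ j) :|: Om.
have jX : j \notin X by rewrite in_setU in_setD1 eqxx /= (negbTE jOm).
have [lo _] := curvU jX.
have jT : j \notin S :\ j by rewrite in_setD1 eqxx.
have [_ up] := curvU jT.
have -> : 1 - alpha_ub = a ^+ 2 / b ^+ 2 by rewrite /alpha_ub; ring.
apply: le_trans lo.
apply: le_trans (ler_wpM2l (ltW q0) up) _.
rewrite le_eqVlt; apply/orP; left; apply/eqP.
by field; rewrite ?expf_neq0 ?gt_eqF.
Qed.

End Hyps.
End Main.


Theorem theorem1 (R : realType) (n p l : nat) (A : 'M[R]_n) (C : 'M[R]_(p, n))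
  (X0 W : 'M[R]_n) (sig : 'I_p -> R) (lmin lmax : R) :
  (0 < n)%N -> (0 < p)%N -> (0 < l)%N ->
  spd X0 -> spd W -> (forall i, 0 < sig i) ->
  is_lambda_min (Lmx l X0 W) lmin ->
  is_lambda_max (Lmx l X0 W + Umx l A C sig [set: 'I_p]) lmax ->
  let f := fobj l A C X0 W sig in
  let gamma_lb := lmin / lmax in
  let alpha_ub := 1 - lmin ^+ 2 / lmax ^+ 2 in
  (forall S1 S2 : {set 'I_p}, S1 \subset S2 -> f S1 <= f S2) /\
  (forall g, is_submod_ratio f g -> gamma_lb <= g) /\ 0 < gamma_lb /\
  (forall a, is_curvature f a -> a <= alpha_ub) /\ alpha_ub < 1.
Proof.
move=> n0 p0 l0 hX0 hW hsig hmin hmax.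
exact: (@final R n p l A C X0 W sig hsig hX0 hW n0 l0 lmin lmax hmin hmax).
Qed.
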